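(* Let $\alpha,n\in\mathbb{Q}$ with $n\neq0$. The elliptic curve $$E_{\alpha,-n^2}:\ y^2=x^3+\alpha x^2-n^2x$$ has no rational point of order $5$. *)

(* Defs.v *)
From mathcomp Require Import all_boot all_order all_algebra.
Set Implicit Arguments. Unset Strict Implicit. Unset Printing Implicit Defensive.
Import Order.TTheory GRing.Theory Num.Theory.
Local Open Scope ring_scope.

(* A projective point: None = point at infinity O, Some (x,y) = affine point. *)
Definition ecpt := option (rat * rat).

Definition on_curve (a b : rat) (P : ecpt) : Prop :=
  match P with
  | None => True
  | Some (x, y) => y ^+ 2 = x ^+ 3 + a * x ^+ 2 + b * x
  end.

Definition ec_add (a b : rat) (P Q : ecpt) : ecpt :=
  match P, Q with
  | None, _ => Q
  | _, None => P
  | Some (x1, y1), Some (x2, y2) =>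
      if (x1 == x2) && (y1 + y2 == 0) then None
      else
        let l := if x1 == x2
                 then (3 * x1 ^+ 2 + 2 * a * x1 + b) / (2 * y1)
                 else (y2 - y1) / (x2 - x1) in
        let x3 := l ^+ 2 - a - x1 - x2 in
        Some (x3, l * (x1 - x3) - y1)
  end.

Fixpoint ec_mul (a b : rat) (k : nat) (P : ecpt) : ecpt :=
  match k with
  | 0 => None
  | k'.+1 => ec_add a b P (ec_mul a b k' P)
  end.

Definition has_order (a b : rat) (P : ecpt) (m : nat) : Prop :=
  (0 < m)%N /\ ec_mul a b m P = None /\
  (forall k : nat, (0 < k)%N -> (k < m)%N -> ec_mul a b k P <> None).

(* Main.v *)
Require Import Defs.
From mathcomp Require Import all_boot all_order all_algebra.
Import Order.TTheory GRing.Theory Num.Theory.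
Local Open Scope ring_scope.
From mathcomp Require Import zify ring lra.

Close Scope ring_scope.
Set Implicit Arguments. Unset Strict Implicit. Unset Printing Implicit Defensive.

Lemma gcdn_sq a b : gcdn (a ^ 2) (b ^ 2) = (gcdn a b) ^ 2.
Proof.
have [g0|gpos] := posnP (gcdn a b).
  have := gcdn_gt0 a b; rewrite g0 ltnn => /esym/norP[]; rewrite -!eqn0Ngt => /eqP-> /eqP->; by [].
set g := gcdn a b.
have ha : a = a %/ g * g by rewrite divnK // dvdn_gcdl.
have hb : b = b %/ g * g by rewrite divnK // dvdn_gcdr.
have cop : coprime (a %/ g) (b %/ g).
  rewrite /coprime; apply/eqP.
  have : g * gcdn (a %/ g) (b %/ g) = g * 1.
    by rewrite muln_gcdr muln1 ![g * (_ %/ g)]mulnC -ha -hb.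
  by move/eqP; rewrite eqn_pmul2l // => /eqP.
rewrite ha hb !expnMn -muln_gcdl.
have -> : gcdn ((a %/ g) ^ 2) ((b %/ g) ^ 2) = 1.
  by move: (coprimeXl 2 (coprimeXr 2 cop)) => /eqP.
by rewrite mul1n.
Qed.

Lemma sq_split x y c : coprime x y -> x * y = c ^ 2 -> x = (gcdn x c) ^ 2.
Proof.
move=> cxy e.
rewrite -gcdn_sq -e expnS expn1 -muln_gcdr.
by move/eqP: cxy => ->; rewrite muln1.
Qed.

Lemma sq_inj a b : a ^ 2 = b ^ 2 -> a = b.
Proof. by move/eqP; rewrite eqn_exp2r // => /eqP. Qed.

Lemma quart_split x y c : coprime x y -> x * y = c ^ 4 ->
  exists u v, [/\ x = u ^ 4, y = v ^ 4 & c = u * v].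
Proof.
move=> cxy e.
have e2 : x * y = (c ^ 2) ^ 2 by rewrite -expnM.
have hx := sq_split cxy e2.
have hy : y = (gcdn y (c ^ 2)) ^ 2.
  by apply: (sq_split (y:=x) (c:=c ^ 2)); rewrite 1?coprime_sym 1?mulnC.
set g := gcdn x (c ^ 2) in hx; set h := gcdn y (c ^ 2) in hy.
have cgh : coprime g h.
  have cgy : coprime g y by apply: (coprime_dvdl (dvdn_gcdl _ _)).
  by rewrite coprime_sym; apply: (coprime_dvdl (dvdn_gcdl _ _)); rewrite coprime_sym.
have egh : g * h = c ^ 2.
  apply: sq_inj; rewrite expnMn -hx -hy e2 //.
have hg := sq_split cgh egh.
have hh : h = (gcdn h c) ^ 2.
  by apply: (sq_split (y:=g) (c:=c)); rewrite 1?coprime_sym 1?mulnC.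
exists (gcdn g c), (gcdn h c); split.
- by rewrite hx {1}hg -expnM.
- by rewrite hy {1}hh -expnM.
- apply: sq_inj; rewrite expnMn -hg -hh egh //.
Qed.

Lemma coprime_by_primes p q : 0 < p ->
  (forall l, prime l -> l %| p -> l %| q -> False) -> coprime p q.
Proof.
move=> pp H; rewrite /coprime.
have gp : 0 < gcdn p q by rewrite gcdn_gt0 pp.
case: (ltngtP (gcdn p q) 1) => [|g1|//].
  by rewrite ltnS leqn0 => /eqP g0; rewrite g0 in gp.
have [l pl ldv] := pdivP g1.
exfalso; apply: (H l pl).
- exact: dvdn_trans ldv (dvdn_gcdl _ _).
- exact: dvdn_trans ldv (dvdn_gcdr _ _).
Qed.


Lemma eo x : exists m, x = 2 * m \/ x = 2 * m+1.
Proof. exists x./2. have := odd_double_half x. case: (odd x) => /= <-; lia. Qed.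

Lemma sq_odd8 x : exists k, x ^ 2 = 8 * k + 1 \/ x ^ 2 = 4 * k.
Proof.
have [m [->|->]] := eo x; first by exists (m^2); lia.
have [i [->|->]] := eo m.
  by exists (2 * i^2+i); lia.
by exists (2 * i^2+3 * i+1); lia.
Qed.

Lemma dvd_l l a b : l %| a -> l %| b -> 0 < a -> 0 < b -> 
  False \/ l %| a.
Proof. by right. Qed.

Lemma step1 A B W : 0 < B -> coprime A B -> A ^ 4 = W ^ 2 + A ^ 2 * B ^ 2 + B ^ 4 ->
  exists u v, [/\ 0 < u, 0 < v, coprime u v, odd A & 
    (B = 2 * (u * v)) /\ A ^ 2 = u ^ 4 + 2 * u ^ 2 * v ^ 2 + 5 * v ^ 4].
Proof.
move=> Bpos cAB E.
have Bev : ~~ odd B.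
  apply/negP => oB.
  have eA : A^4 = (A^2)^2 by rewrite -expnM.
  have eB : B^4 = (B^2)^2 by rewrite -expnM.
  rewrite eA eB in E.
  have [kb [hb|hb]] := sq_odd8 B; last first.
    by have [m [hm|hm]] := eo B; rewrite hm in oB hb; [rewrite oddM in oB | lia].
  have [kw [hw|hw]] := sq_odd8 W.
  - have [m [hm|hm]] := eo A.
    + rewrite hb hw hm in E; lia.
    + have [ka [ha|ha]] := sq_odd8 A.
      * rewrite hb hw ha in E; lia.
      * rewrite hm in ha; lia.
  - have [m [hm|hm]] := eo A.
    + rewrite hb hw hm in E; lia.
    + have [ka [ha|ha]] := sq_odd8 A.
      * rewrite hb hw ha in E; lia.
      * rewrite hm in ha; lia.
have oA : odd A.
  have c2 : coprime A 2.
    apply: (coprime_dvdr _ cAB); rewrite dvdn2; exact: Bev.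
  by rewrite coprimen2 in c2.
have [b hb] : exists b, B = 2 * b by exists B./2; move: (odd_double_half B); rewrite (negbTE Bev) /=; lia.
have bpos : 0 < b by lia.
have [al hal] : exists al, A = 2 * al + 1 by exists A./2; move: (odd_double_half A); rewrite oA /=; lia.
have oW : odd W.
  have [w [hw|hw]] := eo W; last by rewrite hw oddD oddM.
  rewrite hw hal hb in E; lia.
have [w hw] : exists w, W = 2 * w + 1 by exists W./2; move: (odd_double_half W); rewrite oW /=; lia.
have e2 : A^4 = (A^2)^2 by rewrite -expnM.
have BA : B ^ 2 <= A ^ 2.
  rewrite leqNgt; apply/negP => lt.
  have : A^2 * A^2 < A^2 * B^2 by rewrite ltn_pmul2l // expn_gt0; lia.
  rewrite -expnMn -e2 E; lia.
have [S hS] : exists S, A ^ 2 = S + 2 * b ^ 2 by exists (A^2 - 2 * b^2); rewrite hb in BA; lia.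
have ES : S ^ 2 = W ^ 2 + 20 * b ^ 4.
  rewrite e2 hS hb in E. lia.
have [s hs] : exists s, S = 2 * s + 1.
  have [m [hm|hm]] := eo S; last by exists m.
  exfalso; rewrite hal hm in hS; lia.
have [p hp] : exists p, S = W + 2 * p.
  have b4 : 0 < b ^ 4 by rewrite expn_gt0 bpos.
  exists (s - w). have : W ^ 2 < S ^ 2 by rewrite ES; lia.
  rewrite ltn_exp2r // hs hw; lia.
have Epq : p * (W + p) = 5 * b ^ 4 by rewrite hp in ES; lia.
have b4 : 0 < b ^ 4 by rewrite expn_gt0 bpos.
have ppos : 0 < p by case: p Epq {hp} => [|//]; rewrite mul0n; lia.
set q := W + p in Epq.
have lb : forall l, prime l -> l %| b -> l %| S -> False.
  move=> l pl lb lS.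
  have lA2 : l %| A ^ 2 by rewrite hS dvdn_add // dvdn_mull // dvdn_exp.
  have lA : l %| A by move: lA2; rewrite Euclid_dvdX // => /andP[].
  have lB : l %| B by rewrite hb dvdn_mull.
  have : l %| gcdn A B by rewrite dvdn_gcd lA lB.
  move/eqP: cAB => ->.
  by rewrite dvdn1 => /eqP l1; rewrite l1 in pl.
have cpq : coprime p q.
  apply: coprime_by_primes => // l pl lp lq.
  have lS : l %| S.
    have -> : S = q + p by rewrite hp /q; lia.
    by rewrite dvdn_add.
  have : l %| 5 * b ^ 4 by rewrite -Epq dvdn_mulr.
  rewrite Euclid_dvdM // Euclid_dvdX // andbT => /orP[l5|]; last first.
    by move=> lb'; apply: (lb l pl lb' lS).
  have l5' : l = 5 by move: l5; rewrite dvdn_prime2 // => /eqP.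
  subst l.
  have [p1 hp1] : exists p1, p = 5 * p1 by exists (p %/ 5); lia.
  have [q1 hq1] : exists q1, q = 5 * q1 by exists (q %/ 5); lia.
  have : 5 %| b ^ 4.
    apply/dvdnP; exists (p1 * q1); move: Epq; rewrite hp1 hq1; lia.
  rewrite Euclid_dvdX // andbT => l5b; exact: (lb 5 isT l5b lS).
have : 5 %| p * q by rewrite Epq dvdn_mulr.
rewrite Euclid_dvdM // => /orP[h5|h5].
- have [p1 hp1] : exists p1, p = 5 * p1 by exists (p %/ 5); lia.
  have cp1 : coprime p1 q by apply: (coprime_dvdl _ cpq); rewrite hp1 dvdn_mull.
  have e1 : p1 * q = b ^ 4 by move: Epq; rewrite hp1; lia.
  have [v [u [hv hu hvu]]] := quart_split cp1 e1.
  + exists u, v; split => //.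
    * rewrite lt0n; apply/eqP => u0; move: hvu; rewrite u0 muln0; lia.
    * rewrite lt0n; apply/eqP => v0; move: hvu; rewrite v0 mul0n; lia.
    * have : coprime (v ^ 4) (u ^ 4) by rewrite -hv -hu.
      by rewrite coprime_pexpl // coprime_pexpr // coprime_sym.
    * rewrite hb hvu; split; first lia.
      move: hu; rewrite /q => hu.
      rewrite hS hp hvu expnMn hp1 hv; lia.
- have [q1 hq1] : exists q1, q = 5 * q1 by exists (q %/ 5); lia.
  have cq1 : coprime p q1 by apply: (coprime_dvdr _ cpq); rewrite hq1 dvdn_mull.
  have e1 : p * q1 = b ^ 4 by move: Epq; rewrite hq1; lia.
  have [u [v [hu hv huv]]] := quart_split cq1 e1.
  + exists u, v; split => //.
    * rewrite lt0n; apply/eqP => u0; move: huv; rewrite u0 mul0n; lia.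
    * rewrite lt0n; apply/eqP => v0; move: huv; rewrite v0 muln0; lia.
    * have : coprime (u ^ 4) (v ^ 4) by rewrite -hv -hu.
      by rewrite coprime_pexpl // coprime_pexpr.
    * rewrite hb huv; split; first lia.
      have hq : q = 5 * v ^ 4 by rewrite hq1 hv.
      move: hq; rewrite /q => hq.
      rewrite hS hp huv expnMn hu; lia.
Qed.


Lemma step2 u v A : 0 < u -> 0 < v -> coprime u v -> odd A ->
  A ^ 2 = u ^ 4 + 2 * u ^ 2 * v ^ 2 + 5 * v ^ 4 ->
  exists e f W, [/\ 0 < f, f <= v, coprime e f & e ^ 4 = W ^ 2 + e ^ 2 * f ^ 2 + f ^ 4].
Proof.
move=> upos vpos cuv oA E.
set T := u ^ 2 + v ^ 2.
have ET : A ^ 2 = T ^ 2 + 4 * v ^ 4.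
  have h1 : u ^ 4 = (u ^ 2) ^ 2 by rewrite -expnM.
  have h2 : v ^ 4 = (v ^ 2) ^ 2 by rewrite -expnM.
  rewrite E /T h1 h2; lia.
have [al hal] : exists al, A = 2 * al + 1 by exists A./2; move: (odd_double_half A); rewrite oA /=; lia.
have [t ht] : exists t, T = 2 * t + 1.
  have [m [hm|hm]] := eo T; last by exists m.
  exfalso; rewrite hal hm in ET; lia.
have v4 : 0 < v ^ 4 by rewrite expn_gt0 vpos.
have [c hc] : exists c, A = T + 2 * c.
  exists (al - t). have : T ^ 2 < A ^ 2 by rewrite ET; lia.
  rewrite ltn_exp2r // hal ht; lia.
have Ecd : c * (T + c) = v ^ 4 by rewrite hc in ET; lia.
have cpos : 0 < c by case: c Ecd {hc} => [|//]; rewrite mul0n; lia.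
set d := T + c in Ecd.
have ccd : coprime c d.
  apply: coprime_by_primes => // l pl lc ld.
  have lv4 : l %| v ^ 4 by rewrite -Ecd dvdn_mulr.
  have lv : l %| v by move: lv4; rewrite Euclid_dvdX // => /andP[].
  have lT : l %| T by move: ld; rewrite /d dvdn_addl.
  have lv2 : l %| v ^ 2 by rewrite dvdn_exp.
  have lu2 : l %| u ^ 2 by move: lT; rewrite /T dvdn_addl.
  have lu : l %| u by move: lu2; rewrite Euclid_dvdX // => /andP[].
  have : l %| gcdn u v by rewrite dvdn_gcd lu lv.
  move/eqP: cuv => ->.
  by rewrite dvdn1 => /eqP l1; rewrite l1 in pl.
have [f [e [hf he hv]]] := quart_split ccd Ecd.
have fpos : 0 < f.
  by rewrite lt0n; apply/eqP => f0; move: hf; rewrite f0; lia.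
have epos : 0 < e.
  by rewrite lt0n; apply/eqP => e0; move: hv; rewrite e0 muln0; lia.
exists e, f, u; split => //.
- by rewrite hv leq_pmulr.
- have : coprime (f ^ 4) (e ^ 4) by rewrite -hf -he.
  by rewrite coprime_pexpl // coprime_pexpr // coprime_sym.
- have h : e ^ 4 = T + c by rewrite -he.
  have h2 : v ^ 2 = e ^ 2 * f ^ 2 by rewrite hv expnMn mulnC.
  have h3 : u ^ 4 = (u ^ 2) ^ 2 by rewrite -expnM.
  move: h; rewrite /T hf h2. lia.
Qed.

Lemma descent B : forall A W, 0 < B -> coprime A B ->
  A ^ 4 = W ^ 2 + A ^ 2 * B ^ 2 + B ^ 4 -> False.
Proof.
elim/ltn_ind: B => B IH A W Bpos cAB E.
have [u [v [upos vpos cuv oA [hB E2]]]] := step1 Bpos cAB E.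
have [e [f [W' [fpos fv cef E']]]] := step2 upos vpos cuv oA E2.
apply: (IH f _ e W' fpos cef E').
rewrite hB. apply: (leq_ltn_trans fv).
have h : v <= u * v by rewrite leq_pmull.
lia.
Qed.


Lemma quartic_nat x y z k : 0 < x -> 0 < y -> coprime x y ->
  x ^ 2 = z + x * y + y ^ 2 -> x * y * z = k ^ 2 -> False.
Proof.
move=> xpos ypos cxy E K.
have not1 : forall l, prime l -> l %| x -> l %| y -> False.
  move=> l pl lx ly.
  have : l %| gcdn x y by rewrite dvdn_gcd lx ly.
  move/eqP: cxy => ->.
  by rewrite dvdn1 => /eqP l1; rewrite l1 in pl.
have cxz : coprime x z.
  apply: coprime_by_primes => // l pl lx lz.
  apply: (not1 l pl lx).
  have h : l %| z + x * y + y ^ 2 by rewrite -E dvdn_exp.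
  have h2 : l %| y ^ 2 by move: h; rewrite dvdn_addr // dvdn_add // dvdn_mulr.
  by move: h2; rewrite Euclid_dvdX // => /andP[].
have cyz : coprime y z.
  apply: coprime_by_primes => // l pl ly lz.
  apply: (not1 l pl) => //.
  have h : l %| z + x * y + y ^ 2 by rewrite dvdn_add // ?dvdn_add // ?dvdn_mull // dvdn_exp.
  by move: h; rewrite -E Euclid_dvdX // => /andP[].
have cx : coprime x (y * z) by rewrite coprimeMr cxy cxz.
have K' : x * (y * z) = k ^ 2 by rewrite mulnA.
have hx := sq_split cx K'.
have hyz : y * z = (gcdn (y * z) k) ^ 2.
  by apply: (sq_split (y:=x)); rewrite 1?coprime_sym // mulnC.
have hy := sq_split cyz hyz.
have hz : z = (gcdn z (gcdn (y * z) k)) ^ 2.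
  by apply: (sq_split (y:=y)); rewrite 1?coprime_sym // mulnC.
set U := gcdn x k in hx; set V := gcdn y _ in hy; set W := gcdn z _ in hz.
apply: (@descent V U W).
- by rewrite lt0n; apply/eqP => v0; move: hy; rewrite v0; lia.
- have : coprime (U ^ 2) (V ^ 2) by rewrite -hx -hy.
  by rewrite coprime_pexpl // coprime_pexpr.
- have h1 : U ^ 4 = (U ^ 2) ^ 2 by rewrite -expnM.
  have h2 : V ^ 4 = (V ^ 2) ^ 2 by rewrite -expnM.
  by rewrite h1 h2 -hx -hy -hz E.
Qed.



Local Open Scope ring_scope.
Lemma no_rat_pt (t m : rat) : m != 0 -> m ^+ 2 = t ^+ 3 - t ^+ 2 - t -> False.
Proof.
move=> m0 Em.
set N := numq t; set D := denq t.
have Dpos : 0 < D := denq_gt0 t.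
have tD : t * D%:~R = N%:~R.
  rewrite -{1}(divq_num_den t) -/N -/D mulfVK //.
  by rewrite intr_eq0 gt_eqF.
set Z := N ^+ 2 - N * D - D ^+ 2.
set K := N * D * Z.
set M := m * (D%:~R) ^+ 2.
have EM : M ^+ 2 = K%:~R.
  have -> : M ^+ 2 = m ^+ 2 * (D%:~R) ^+ 4 by rewrite /M; ring.
  rewrite Em.
  have -> : (t ^+ 3 - t ^+ 2 - t) * (D%:~R) ^+ 4 =
    (t * D%:~R) ^+ 3 * D%:~R - (t * D%:~R) ^+ 2 * (D%:~R) ^+ 2 - (t * D%:~R) * (D%:~R) ^+ 3 by ring.
  rewrite tD /K /Z !rmorphM /= !rmorphB /= !rmorphXn /= rmorphM /=; ring.
have M0 : M != 0 by rewrite /M mulf_neq0 // expf_neq0 // intr_eq0 gt_eqF.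
set p := numq M; set q := denq M.
have qpos : 0 < q := denq_gt0 M.
have Mq : M * q%:~R = p%:~R.
  rewrite -{1}(divq_num_den M) -/p -/q mulfVK //.
  by rewrite intr_eq0 gt_eqF.
have Epq : p ^+ 2 = K * q ^+ 2.
  apply: (@intr_inj rat).
  by rewrite rmorphXn /= -Mq rmorphM /= rmorphXn /= -EM; ring.
have Eabs : (`|p| ^ 2 = `|K| * `|q| ^ 2)%N by rewrite -!abszX Epq abszM.
have q1 : `|q|%N = 1%N.
  have cpq : coprime `|q| (`|p| ^ 2) by rewrite coprimeXr // coprime_sym coprime_num_den.
  have : (`|q| %| `|p| ^ 2)%N by rewrite Eabs; apply: dvdn_mull; rewrite expnS dvdn_mulr.
  rewrite /coprime in cpq.
  by move/gcdn_idPl; move/eqP: cpq => ->.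
rewrite q1 exp1n muln1 in Eabs.
have K0 : K != 0.
  apply/negP => /eqP K0; move: EM; rewrite K0 /= => /eqP; rewrite expf_eq0 /=.
  by rewrite (negbTE M0).
have Kge0 : 0 <= K.
  by rewrite -(ler_int rat) -EM sqr_ge0.
have habsK : `|K|%N = (`|N| * `|D| * `|Z|)%N by rewrite /K !abszM.
have hD : D = (`|D|%N)%:Z by rewrite gez0_abs // ltW.
have Dnat : (0 < `|D|)%N by rewrite absz_gt0 gt_eqF.
have cND : coprime `|N| `|D| := coprime_num_den t.
have N0 : N != 0 by apply/negP => /eqP N00; move: K0; rewrite /K N00 !mul0r eqxx.
have hZdef : Z = N ^+ 2 - N * D - D ^+ 2 by [].
have Kpos : 0 < K by rewrite lt_def K0 Kge0.
have [Nneg|Npos|N00] := ltgtP N 0; last by move: N0; rewrite N00.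
- have hN : N = - (`|N|%N)%:Z by rewrite ltz0_abs // opprK.
  have ND : N * D < 0 by rewrite nmulr_rlt0.
  have Zneg : Z < 0 by move: Kpos; rewrite /K nmulr_rgt0.
  have hZ : Z = - (`|Z|%N)%:Z by rewrite ltz0_abs // opprK.
  apply: (@quartic_nat `|D| `|N| `|Z| `|p|) => //.
  + by rewrite absz_gt0.
  + by rewrite coprime_sym.
  + move: hZdef; rewrite {1}hZ {1}hN {1}hD; rewrite {1}hN {1}hD. lia.
  + by rewrite Eabs habsK; lia.
- have hN : N = (`|N|%N)%:Z by rewrite gez0_abs // ltW.
  have ND : 0 < N * D by rewrite pmulr_rgt0.
  have Zpos : 0 < Z by move: Kpos; rewrite /K pmulr_rgt0.
  have hZ : Z = (`|Z|%N)%:Z by rewrite gez0_abs // ltW.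
  apply: (@quartic_nat `|N| `|D| `|Z| `|p|) => //.
  + by rewrite absz_gt0.
  + move: hZdef; rewrite {1}hZ {1}hN {1}hD; rewrite {1}hN {1}hD. lia.
  + by rewrite Eabs habsK.
Qed.


Definition Cc (a b x : rat) := x ^+ 3 + a * x ^+ 2 + b * x.

Lemma chord (a b x1 y1 x2 y2 l : rat) : x1 != x2 ->
  y1 ^+ 2 = Cc a b x1 -> y2 ^+ 2 = Cc a b x2 -> l * (x2 - x1) = y2 - y1 ->
  (l * (x1 - (l ^+ 2 - a - x1 - x2)) - y1) ^+ 2 = Cc a b (l ^+ 2 - a - x1 - x2).
Proof.
move=> ne e1 e2 hl.
set x3 := l ^+ 2 - a - x1 - x2.
have key : (x2 - x1) * (Cc a b x3 - (l * (x1 - x3) - y1) ^+ 2) =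
  (Cc a b x1 - y1 ^+ 2) * (x2 - x3) + (Cc a b x2 - (y1 + l * (x2 - x1)) ^+ 2) * (x3 - x1).
  rewrite /x3 /Cc; ring.
have h2 : y1 + l * (x2 - x1) = y2 by rewrite hl; ring.
move: key; rewrite h2 -e1 -e2 !subrr !mul0r addr0 => /eqP.
rewrite mulf_eq0 subr_eq0 eq_sym (negbTE ne) /= subr_eq0 => /eqP.
by move=> ->.
Qed.

Lemma main_alg (a b x y l x2 y2 l3 x3 y3 l4 : rat) :
  y != 0 -> y ^+ 2 = Cc a b x ->
  l * (2 * y) = 3 * x ^+ 2 + 2 * a * x + b ->
  x2 = l ^+ 2 - a - 2 * x -> y2 = l * (x - x2) - y ->
  x != x2 -> l3 * (x2 - x) = y2 - y ->
  x3 = l3 ^+ 2 - a - x - x2 -> y3 = l3 * (x - x3) - y ->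
  x != x3 -> l4 * (x3 - x) = y3 - y ->
  l4 ^+ 2 - a - x - x3 = x ->
  exists r s : rat, b = r * s * (r ^+ 2 + r * s - s ^+ 2).
Proof.
move=> y0 C hl hx2 hy2 nx2 hl3 hx3 hy3 nx3 hl4 hx4.
set mu := y - l * x.
have T1 : b - 2 * l * mu = x ^+ 2 + 2 * x * x2.
  apply/eqP; rewrite -subr_eq0; apply/eqP.
  transitivity ((3 * x ^+ 2 + 2 * a * x + b) - l * (2 * y)); last by rewrite hl subrr.
  rewrite /mu hx2; ring.
have T2 : mu ^+ 2 = x ^+ 2 * x2.
  apply/eqP; rewrite -subr_eq0; apply/eqP.
  transitivity ((y ^+ 2 - Cc a b x) + x * ((3 * x ^+ 2 + 2 * a * x + b) - l * (2 * y))).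
    rewrite /mu hx2 /Cc; ring.
  by rewrite hl C !subrr mulr0 addr0.
have hT : forall X, Cc a b X - (l * X + mu) ^+ 2 = (X - x) ^+ 2 * (X - x2).
  move=> X; apply/eqP; rewrite -subr_eq0; apply/eqP.
  transitivity ((b - 2 * l * mu - (x ^+ 2 + 2 * x * x2)) * X + (x ^+ 2 * x2 - mu ^+ 2)).
    rewrite /Cc hx2; ring.
  by rewrite T1 T2 !subrr mul0r addr0.
have C2 : y2 ^+ 2 = Cc a b x2.
  have := hT x2; rewrite subrr mulr0 => /eqP; rewrite subr_eq0 => /eqP ->.
  rewrite hy2 /mu; ring.
have C3 : y3 ^+ 2 = Cc a b x3.
  have := chord nx2 C C2 hl3. by rewrite -hx3 -hy3.
have hl4l : l4 = l.
  have key : (x3 - x) * ((3 * x ^+ 2 + 2 * a * x + b) - l4 * (2 * y) - (x - x3) * (x - (l4 ^+ 2 - a - x - x3)))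
     = (Cc a b x3 - (y + l4 * (x3 - x)) ^+ 2) - (Cc a b x - y ^+ 2).
    rewrite /Cc; ring.
  have h3 : y + l4 * (x3 - x) = y3 by rewrite hl4; ring.
  move: key; rewrite hx4 h3 -C -C3 !subrr mulr0 subr0 => /eqP.
  rewrite mulf_eq0 subr_eq0 eq_sym (negbTE nx3) /= -hl subr_eq0 => /eqP.
  have y2n : 2 * y != 0 by rewrite mulf_neq0.
  by move/(congr1 (fun z => z / (2 * y))); rewrite !mulfK.
have hx32 : x3 = x2.
  have h3 : l * x3 + mu = y3 by rewrite /mu -hl4l; move: hl4 => /eqP; rewrite -subr_eq0 => /eqP h; apply/eqP; rewrite -subr_eq0; apply/eqP; rewrite -h; ring.
  have := hT x3; rewrite h3 -C3 subrr => /esym/eqP.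
  rewrite mulf_eq0 expf_eq0 /= subr_eq0 eq_sym (negbTE nx3) /= subr_eq0 => /eqP //.
have hy32 : y3 = - y2.
  rewrite hy2; move: hl4; rewrite hl4l hx32 => h.
  apply/eqP; rewrite -subr_eq0; apply/eqP.
  transitivity (- (l * (x2 - x) - (y3 - y))); first ring.
  by rewrite h subrr oppr0.
have ha : a = l3 ^+ 2 - x - 2 * x2.
  move: hx3; rewrite hx32 => h. apply/eqP; rewrite -subr_eq0; apply/eqP.
  transitivity (x2 - (l3 ^+ 2 - a - x - x2)); first ring.
  by rewrite -h subrr.
set mu3 := y - l3 * x.
have hy2' : l3 * x2 + mu3 = y2.
  apply/eqP; rewrite -subr_eq0; apply/eqP.
  transitivity (l3 * (x2 - x) - (y2 - y)); first by rewrite /mu3; ring.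
  by rewrite hl3 subrr.
have T3 : b - 2 * l3 * mu3 = x2 ^+ 2 + 2 * x * x2.
  have key : (x2 - x) * (b - 2 * l3 * mu3 - (x2 ^+ 2 + 2 * x * x2)) =
    (Cc a b x2 - (l3 * x2 + mu3) ^+ 2) - (Cc a b x - (l3 * x + mu3) ^+ 2).
    rewrite /Cc /mu3 ha; ring.
  have h1 : l3 * x + mu3 = y by rewrite /mu3; ring.
  move: key; rewrite hy2' h1 -C -C2 !subrr => /eqP.
  rewrite mulf_eq0 subr_eq0 eq_sym (negbTE nx2) /= subr_eq0 => /eqP //.
have T4 : mu3 ^+ 2 = x2 ^+ 2 * x.
  have key : (x2 ^+ 2 * x - mu3 ^+ 2) =
    (Cc a b x - (l3 * x + mu3) ^+ 2) - x * (b - 2 * l3 * mu3 - (x2 ^+ 2 + 2 * x * x2)).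
    rewrite /Cc /mu3 ha; ring.
  have h1 : l3 * x + mu3 = y by rewrite /mu3; ring.
  move: key; rewrite h1 -C T3 !subrr mulr0 subr0 => /eqP.
  by rewrite subr_eq0 => /eqP.
have hmuy : mu = y - l * x by [].
have hmu3y : mu3 = y - l3 * x by [].
have x0 : x != 0.
  apply/negP => /eqP x0; move: T2; rewrite x0 expr0n /= mul0r => /eqP.
  rewrite expf_eq0 /= hmuy x0 mulr0 subr0; exact/negP.
have x20 : x2 != 0.
  apply/negP => /eqP x20.
  have m3 : mu3 = 0 by move: T4; rewrite x20 expr0n /= mul0r => /eqP; rewrite expf_eq0 /= => /eqP.
  have m1 : mu = 0 by move: T2; rewrite x20 mulr0 => /eqP; rewrite expf_eq0 /= => /eqP.
  have ll3 : l = l3.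
    have : (l - l3) * x = 0.
      transitivity (mu3 - mu); first by rewrite hmuy hmu3y; ring.
      by rewrite m1 m3 subrr.
    move/eqP; rewrite mulf_eq0 (negbTE x0) orbF subr_eq0 => /eqP //.
  move: hx2; rewrite ha -ll3 x20 => h.
  have : x = 0.
    apply/eqP; rewrite -subr_eq0; apply/eqP.
    transitivity (- (l ^+ 2 - (l ^+ 2 - x - 2 * 0) - 2 * x)); first ring.
    by rewrite -h oppr0.
  by move/eqP; rewrite (negbTE x0).
set r := mu / x.
have hmu : mu = r * x by rewrite /r divfK.
have hx2r : x2 = r ^+ 2.
  have : x ^+ 2 * (x2 - r ^+ 2) = 0.
    transitivity (x ^+ 2 * x2 - (r * x) ^+ 2); first ring.
    by rewrite -hmu T2 subrr.
  move/eqP; rewrite mulf_eq0 expf_eq0 /= (negbTE x0) /= subr_eq0 => /eqP //.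
have r0 : r != 0 by apply/negP => /eqP r0; move: x20; rewrite hx2r r0 expr0n.
set s := mu3 / x2.
have hmu3 : mu3 = s * x2 by rewrite /s divfK.
have hxs : x = s ^+ 2.
  have : x2 ^+ 2 * (x - s ^+ 2) = 0.
    transitivity (x2 ^+ 2 * x - (s * x2) ^+ 2); first ring.
    by rewrite -hmu3 T4 subrr.
  move/eqP; rewrite mulf_eq0 expf_eq0 /= (negbTE x20) /= subr_eq0 => /eqP //.
have s0 : s != 0 by apply/negP => /eqP s0; move: x0; rewrite hxs s0 expr0n.
have hmu' : mu = r * s ^+ 2 by rewrite hmu hxs.
have hmu3' : mu3 = s * r ^+ 2 by rewrite hmu3 hx2r.
have E1 : s * (s * (l - l3) - (r ^+ 2 - r * s)) = 0.
  transitivity ((l * x + mu) - (l3 * x + mu3)).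
    rewrite hmu' hmu3' hxs; ring.
  rewrite hmuy hmu3y; ring.
have E2 : r * (r * (l + l3) - (- s ^+ 2 - r * s)) = 0.
  transitivity ((l * x2 + mu) + (l3 * x2 + mu3)).
    rewrite hmu' hmu3' hx2r; ring.
  rewrite hy2' hy2 hmuy; ring.
move/eqP: E1; rewrite mulf_eq0 (negbTE s0) /= => /eqP E1.
move/eqP: E2; rewrite mulf_eq0 (negbTE r0) /= => /eqP E2.
have Tb : b = 2 * l * (r * s ^+ 2) + s ^+ 4 + 2 * s ^+ 2 * r ^+ 2.
  apply/eqP; rewrite -subr_eq0; apply/eqP.
  transitivity ((b - 2 * l * mu) - (x ^+ 2 + 2 * x * x2)).
    rewrite hmu' hxs hx2r; ring.
  by rewrite T1 subrr.
exists r, s.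
apply/eqP; rewrite -subr_eq0; apply/eqP.
transitivity (s * (r * (s * (l - l3) - (r ^+ 2 - r * s)) + s * (r * (l + l3) - (- s ^+ 2 - r * s)))).
  rewrite Tb; ring.
by rewrite E1 E2; ring.
Qed.


Lemma add_same a b x y1 y2 : y1 + y2 != 0 ->
  ec_add a b (Some (x, y1)) (Some (x, y2)) =
  Some (((3 * x ^+ 2 + 2 * a * x + b) / (2 * y1)) ^+ 2 - a - x - x,
        ((3 * x ^+ 2 + 2 * a * x + b) / (2 * y1)) *
          (x - (((3 * x ^+ 2 + 2 * a * x + b) / (2 * y1)) ^+ 2 - a - x - x)) - y1).
Proof. by move=> h; rewrite /= eqxx /= (negbTE h). Qed.

Lemma add_same0 a b x y1 y2 : y1 + y2 = 0 ->
  ec_add a b (Some (x, y1)) (Some (x, y2)) = None.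
Proof. by move=> h; rewrite /= eqxx h eqxx. Qed.

Lemma add_diff a b x1 y1 x2 y2 : x1 != x2 ->
  ec_add a b (Some (x1, y1)) (Some (x2, y2)) =
  Some (((y2 - y1) / (x2 - x1)) ^+ 2 - a - x1 - x2,
        ((y2 - y1) / (x2 - x1)) * (x1 - (((y2 - y1) / (x2 - x1)) ^+ 2 - a - x1 - x2)) - y1).
Proof. by move=> h; rewrite /= (negbTE h). Qed.

Lemma mulS a b k P : ec_mul a b k.+1 P = ec_add a b P (ec_mul a b k P).
Proof. by []. Qed.

Unset Implicit Arguments.
Theorem proposition7p7 (alpha n : rat) (hn : n != 0) (P : ecpt) :
  on_curve alpha (- n ^+ 2) P -> ~ has_order alpha (- n ^+ 2) P 5.
Proof.
move=> onC [_ [H5 Hk]].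
case: P onC H5 Hk => [[x y]|] onC H5 Hk; last by apply: (Hk 1%N).
set b := - n ^+ 2 in onC H5 Hk.
set P := Some (x, y) in H5 Hk.
have H2 := Hk 2%N isT isT; have H3 := Hk 3%N isT isT; have H4 := Hk 4%N isT isT.
have e2 : ec_mul alpha b 2 P = ec_add alpha b P P by [].
have yy : y + y != 0.
  apply/negP => /eqP h; apply: H2; rewrite e2 /P add_same0 //.
move: e2; rewrite /P add_same //.
set l := (3 * x ^+ 2 + 2 * alpha * x + b) / (2 * y).
set x2 := l ^+ 2 - alpha - x - x.
set y2 := l * (x - x2) - y.
move=> e2.
have e3 : ec_mul alpha b 3 P = ec_add alpha b P (Some (x2, y2)) by rewrite mulS e2.
have [hx2|nx2] := eqVneq x x2.
  have [hyy|nyy] := eqVneq (y + y2) 0.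
    by apply: H3; rewrite e3 /P -hx2 add_same0.
  have e3' : ec_mul alpha b 3 P = ec_mul alpha b 2 P.
    by rewrite e3 e2 /P -{1}hx2 add_same // -/l -/x2 -/y2.
  have e4 : ec_mul alpha b 4 P = ec_mul alpha b 3 P by rewrite [LHS]mulS [in LHS]e3'.
  have e5 : ec_mul alpha b 5 P = ec_mul alpha b 4 P by rewrite [LHS]mulS [in LHS]e4.
  by apply: H3; rewrite -e4 -e5.
move: e3; rewrite /P add_diff //.
set l3 := (y2 - y) / (x2 - x).
set x3 := l3 ^+ 2 - alpha - x - x2.
set y3 := l3 * (x - x3) - y.
move=> e3.
have e4 : ec_mul alpha b 4 P = ec_add alpha b P (Some (x3, y3)) by rewrite mulS e3.
have [hx3|nx3] := eqVneq x x3.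
  have [hyy|nyy] := eqVneq (y + y3) 0.
    by apply: H4; rewrite e4 /P -hx3 add_same0.
  have e4' : ec_mul alpha b 4 P = ec_mul alpha b 2 P.
    by rewrite e4 e2 /P -{1}hx3 add_same // -/l -/x2 -/y2.
  have e5 : ec_mul alpha b 5 P = ec_mul alpha b 3 P by rewrite [LHS]mulS [in LHS]e4'.
  by apply: H3; rewrite -e5.
move: e4; rewrite /P add_diff //.
set l4 := (y3 - y) / (x3 - x).
set x4 := l4 ^+ 2 - alpha - x - x3.
set y4 := l4 * (x - x4) - y.
move=> e4.
have e5 : ec_mul alpha b 5 P = ec_add alpha b P (Some (x4, y4)) by rewrite mulS e4.
have hx4 : x4 = x.
  apply/eqP; rewrite eq_sym; apply/negPn/negP => nx4.
  by move: H5; rewrite e5 /P add_diff.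
have y0 : y != 0 by apply: contraNneq yy => ->; rewrite addr0.
have y20 : 2 * y != 0 by rewrite mulf_neq0.
have C : y ^+ 2 = Cc alpha b x by exact: onC.
have hl : l * (2 * y) = 3 * x ^+ 2 + 2 * alpha * x + b by rewrite /l divfK.
have hx2 : x2 = l ^+ 2 - alpha - 2 * x by rewrite /x2; ring.
have hl3 : l3 * (x2 - x) = y2 - y by rewrite /l3 divfK // subr_eq0 eq_sym.
have hl4 : l4 * (x3 - x) = y3 - y by rewrite /l4 divfK // subr_eq0 eq_sym.
have [r [s hb]] := @main_alg alpha b x y l x2 y2 l3 x3 y3 l4 y0 C hl hx2 erefl nx2 hl3 erefl erefl nx3 hl4 hx4.
have r0 : r != 0.
  apply/negP => /eqP r0; move: hb; rewrite r0 !mul0r /b => /eqP.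
  by rewrite oppr_eq0 expf_eq0 /= (negbTE hn).
apply: (@no_rat_pt (s / r) (n / r ^+ 2)).
  by rewrite mulf_neq0 // invr_eq0 expf_neq0.
have hn2 : n ^+ 2 = - (r * s * (r ^+ 2 + r * s - s ^+ 2)) by rewrite -hb /b opprK.
rewrite expr_div_n hn2; field; exact: r0.
Qed.
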